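(* Let $\Gamma$ be a finite complete graph whose edges are coloured red, green and blue in an arbitrary manner. Then there is a finite group $G$ and an injective map $\iota$ from the vertex set of $\Gamma$ into $G$ such that, for distinct vertices $u,v$: if $\{u,v\}$ is red then $\iota(u),\iota(v)$ are adjacent in the enhanced power graph of $G$; if $\{u,v\}$ is green then $\iota(u),\iota(v)$ are adjacent in the commuting graph of $G$ but not in the enhanced power graph; if $\{u,v\}$ is blue then $\iota(u),\iota(v)$ are non-adjacent in the commuting graph of $G$.
   Context: For a group $G$: the commuting graph has vertex set $G$ with distinct $x,y$ adjacent iff $xy=yx$; the enhanced power graph has vertex set $G$ with distinct $x,y$ adjacent iff $\langle x,y\rangle$ is cyclic. *)

(* Defs.v *)
From mathcomp Require Import all_boot all_fingroup all_solvable.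
Set Implicit Arguments. Unset Strict Implicit. Unset Printing Implicit Defensive.

Inductive colour := Red | Green | Blue.

Definition epg_adj (gT : finGroupType) (x y : gT) : bool :=
  (x != y) && cyclic <<[set x; y]>>%g.

Definition comm_adj (gT : finGroupType) (x y : gT) : bool :=
  (x != y) && (x * y == y * x)%g.

(* Main.v *)
Require Import Defs.
From mathcomp Require Import all_boot all_fingroup all_solvable.
From mathcomp Require Import zify.
Set Implicit Arguments. Unset Strict Implicit. Unset Printing Implicit Defensive.

Definition nxtp m := s2val (prime_above m).
Lemma nxtp_gt m : m < nxtp m. Proof. by rewrite /nxtp; case: prime_above. Qed.
Lemma nxtp_prime m : prime (nxtp m). Proof. by rewrite /nxtp; case: prime_above. Qed.
Definition P n := iter n.+1 nxtp 0.
Lemma P_prime n : prime (P n). Proof. exact: nxtp_prime. Qed.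
Lemma P_lt m n : m < n -> P m < P n.
Proof.
elim: n => // n IH; rewrite ltnS leq_eqVlt => /orP[/eqP->|/IH h].
  exact: nxtp_gt.
by apply: (ltn_trans h); exact: nxtp_gt.
Qed.
Lemma P_inj : injective P.
Proof.
move=> m n e; apply/eqP; case: (ltngtP m n) => // h.
  by have := P_lt h; rewrite e ltnn.
by have := P_lt h; rewrite e ltnn.
Qed.

Definition rotn p s i := if (s <= i) && (i < s + p) then s + (i - s).+1 %% p else i.

Lemma iter_rotn p s n i : 0 < p ->
  iter n (rotn p s) i = if (s <= i) && (i < s + p) then s + (i - s + n) %% p else i.
Proof.
move=> p0; elim: n => [|n IH] /=.
  case: ifP => // /andP[h1 h2]; rewrite addn0 modn_small; lia.
rewrite IH; case: ifP => [/andP[h1 h2]|h]; last by rewrite /rotn h.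
have hlt : (i - s + n) %% p < p by rewrite ltn_mod.
rewrite /rotn ifT; last by apply/andP; split; lia.
rewrite addKn; congr (_ + _); by rewrite -[in LHS]addn1 modnDml addn1 addnS.
Qed.

Lemma iter_rotn_p p s q i : 0 < p -> iter (p * q) (rotn p s) i = i.
Proof.
move=> p0; rewrite iter_rotn //; case: ifP => // /andP[h1 h2].
rewrite [X in X %% p]addnC mulnC modnMDl modn_small; lia.
Qed.

Lemma rotn_le p s i N : s + p <= N -> i < N -> rotn p s i < N.
Proof.
move=> h hi; rewrite /rotn; case: ifP => // /andP[h1 h2].
have : (i - s).+1 %% p < p by rewrite ltn_mod; lia.
lia.
Qed.

Section Constr.
Variable V : finType.
Variable c : V -> V -> colour.

Definition K := (V * V)%type.
Definition pr (k : K) := P (enum_rank k).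
Definition N := (P #|{: K}|).*2.
Definition T := (K * 'I_N.+1)%type.

Definition off (w : V) (k : K) : option nat :=
  if k.1 == k.2 then (if w == k.1 then Some 0 else None)
  else match c k.1 k.2 with
  | Red => None
  | Green => if w == k.1 then Some 0 else if w == k.2 then Some (pr k) else None
  | Blue => if w == k.1 then Some 0 else if w == k.2 then Some 1 else None
  end.

Definition rotO p (o : option nat) : nat -> nat := if o is Some s then rotn p s else id.
Definition comp w k := rotO (pr k) (off w k).
Definition g w (t : T) : T := (t.1, inord (comp w t.1 t.2)).

Lemma pr_prime k : prime (pr k). Proof. exact: P_prime. Qed.
Lemma pr_gt1 k : 1 < pr k. Proof. exact: prime_gt1 (pr_prime k). Qed.
Lemma pr_lt k : pr k < P #|{: K}|. Proof. by apply: P_lt; rewrite ltn_ord. Qed.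
Lemma pr_inj : injective pr.
Proof. by move=> k1 k2 /P_inj/ord_inj/enum_rank_inj. Qed.

Lemma off_bound w k s : off w k = Some s -> s + pr k <= N.
Proof.
have h1 := pr_lt k; have h2 := pr_gt1 k.
rewrite /off /N; case: ifP => _.
  by case: ifP => // _ [<-]; lia.
case: (c k.1 k.2) => //; (case: ifP => _; [move=> [<-]; lia|]);
  by case: ifP => // _ [<-]; lia.
Qed.

Lemma comp_le w k i : i < N.+1 -> comp w k i < N.+1.
Proof.
rewrite /comp; case e: (off w k) => [s|] //= hi.
apply: rotn_le hi; have := off_bound e; lia.
Qed.

Lemma iter_comp_le w k i n : i < N.+1 -> iter n (comp w k) i < N.+1.
Proof. by move=> hi; elim: n => //= n IH; apply: comp_le. Qed.

Lemma iter_g w n k (i : 'I_N.+1) :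
  iter n (g w) (k, i) = (k, inord (iter n (comp w k) i)).
Proof.
elim: n => /= [|n ->]; first by rewrite inord_val.
by rewrite /g /= inordK // iter_comp_le.
Qed.

Lemma iter_comp_pr w k i : iter (pr k) (comp w k) i = i.
Proof.
rewrite /comp; case: (off w k) => [s|] /=; last by elim: (pr k) => //= n ->.
by have := @iter_rotn_p (pr k) s 1 i (ltnW (pr_gt1 k)); rewrite muln1.
Qed.

Lemma g_inj w : injective (g w).
Proof.
apply: (can_inj (g := fun t => iter (pr t.1).-1 (g w) t)) => -[k i] /=.
rewrite -iterSr prednK; last by rewrite ltnW // pr_gt1.
by rewrite iter_g iter_comp_pr inord_val.
Qed.

Definition iota w : {perm T} := perm (@g_inj w).

Lemma iotaX w n k i : (iota w ^+ n)%g (k, i) = (k, inord (iter n (comp w k) i)).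
Proof. by rewrite permX -iter_g; apply: eq_iter; exact: permE. Qed.

Lemma iotaM u v k i : (iota u * iota v)%g (k, i) = (k, inord (comp v k (comp u k i))).
Proof. by rewrite permM !permE /g /= inordK // comp_le. Qed.


Hypothesis c_sym : forall u v, c u v = c v u.

Lemma iotaE w k i : iota w (k, i) = (k, inord (comp w k i)).
Proof. by have := iotaX w 1 k i; rewrite expg1. Qed.

Definition supp w := [set k | off w k != None].

Lemma iota_exp1 w n : (forall k, k \in supp w -> pr k %| n) -> (iota w ^+ n)%g = 1%g.
Proof.
move=> h; apply/permP => -[k i]; rewrite iotaX perm1.
rewrite /comp; case e: (off w k) => [s|] /=; last first.
  by elim: n {h} => [|n IH] /=; [rewrite inord_val | ].
have /h /dvdnP[q ->] : k \in supp w by rewrite inE e.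
by rewrite mulnC iter_rotn_p ?inord_val // ltnW // pr_gt1.
Qed.

Lemma cop_prod (A B : {set K}) : [disjoint A & B] ->
  coprime (\prod_(k in A) pr k) (\prod_(k in B) pr k).
Proof.
move=> dAB; apply: (big_ind (fun m => coprime m _)); first exact: coprime1n.
  by move=> m1 m2 h1 h2; rewrite coprimeMl h1.
move=> k kA; apply: (big_ind (fun m => coprime _ m)); first exact: coprimen1.
  by move=> m1 m2 h1 h2; rewrite coprimeMr h1.
move=> k' k'B; rewrite prime_coprime ?pr_prime // dvdn_prime2 ?pr_prime //.
apply/negP => /eqP /pr_inj ek; move: dAB; rewrite disjoint_subset => /subsetP/(_ k kA).
by rewrite inE ek k'B.
Qed.

Lemma both_some u v k : u != v -> off u k != None -> off v k != None ->
  (k = (u, v) \/ k = (v, u)).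
Proof.
case: k => a b uv; rewrite /off /=.
case: (a =P b) => ab; [|case: (c a b)] => //;
  repeat (case: (u =P _) => // ?); repeat (case: (v =P _) => // ?); subst => //;
  try by rewrite eqxx in uv.
all: by auto.
Qed.

Lemma rotn_00 p : 1 < p -> rotn p 0 0 = 1.
Proof. by move=> h; rewrite /rotn /= add0n ifT ?modn_small //; lia. Qed.
Lemma rotn_11 p : 1 < p -> rotn p 1 1 = 2.
Proof. by move=> h; rewrite /rotn /= ifT ?subnn ?modn_small //; lia. Qed.
Lemma rotn_10 p : rotn p 1 0 = 0.
Proof. by []. Qed.
Lemma rot_disj p i : 0 < p -> rotn p 0 (rotn p p i) = rotn p p (rotn p 0 i).
Proof.
move=> p0; rewrite /rotn !add0n !subn0 /=.
have m1 := ltn_mod i.+1 p; have m2 := ltn_mod (i-p).+1 p; rewrite p0 in m1 m2.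
case: (boolP (i < p)) => h1.
  have -> : (p <= i < p + p) = false by lia.
  rewrite h1; have -> : (p <= i.+1 %% p < p + p) = false by lia.
  by [] || (by rewrite modn_mod).
case: (boolP (p <= i < p + p)) => h2.
  by rewrite ltnNge leq_addr.
by rewrite (negbTE h1).
Qed.

Lemma dvd_supp w k : k \in supp w -> pr k %| \prod_(k in supp w) pr k.
Proof. by move=> kS; rewrite (bigD1 k) //= dvdn_mulr. Qed.

Lemma order_supp w : #[iota w]%g %| \prod_(k in supp w) pr k.
Proof. by rewrite order_dvdn iota_exp1 // => k; exact: dvd_supp. Qed.

Lemma red_case u v : u != v -> c u v = Red -> cyclic <<[set iota u; iota v]>>%g.
Proof.
move=> uv cr.
have noff : forall k, off u k != None -> off v k != None -> False.
  move=> k hu hv; case: (both_some uv hu hv) => ek; move: hu; rewrite ek /off /=.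
    by rewrite (negbTE uv) cr.
  by rewrite [v == u]eq_sym (negbTE uv) c_sym cr.
have dj : [disjoint supp u & supp v].
  rewrite disjoint_subset; apply/subsetP => k; rewrite !inE => hu; apply/negP => hv.
  exact: noff hu hv.
have cop : coprime #[iota u]%g #[iota v]%g.
  exact: coprime_dvdl (order_supp u) (coprime_dvdr (order_supp v) (cop_prod dj)).
have cm : commute (iota u) (iota v).
  apply/permP => -[k i]; rewrite !iotaM; congr (_, inord _).
  case eu: (off u k) => [s|]; last by rewrite /comp eu.
  case ev: (off v k) => [s'|]; last by rewrite /comp ev.
  by exfalso; apply: (noff k); rewrite ?eu ?ev.
apply: cyclicS (cycle_cyclic (iota u * iota v)%g).
rewrite gen_subG /= (cycleM cm cop).
apply/subsetP => z; rewrite !inE => /orP[]/eqP->.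
  by rewrite -{1}[iota u]mulg1 mem_mulg ?cycle_id ?group1.
by rewrite -{1}[iota v]mul1g mem_mulg ?cycle_id ?group1.
Qed.


Lemma N_gt k : (pr k).*2 <= N.
Proof. by rewrite /N leq_double ltnW // pr_lt. Qed.

Lemma val_inord (m : nat) : m <= N -> val (inord m : 'I_N.+1) = m.
Proof. by move=> h; exact: inordK. Qed.

Lemma iota_inj u v : u != v -> iota u != iota v.
Proof.
move=> uv; apply/negP => /eqP e.
have := congr1 (fun f : {perm T} => val (f (((u, u) : K), ord0)).2) e.
rewrite /= !iotaE /comp.
have -> : off u (u, u) = Some 0 by rewrite /off /= !eqxx.
have -> : off v (u, u) = None by rewrite /off /= eqxx eq_sym (negbTE uv).
have h1 := pr_gt1 (u, u); have h2 := N_gt (u, u).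
rewrite /= rotn_00 // !val_inord //; lia.
Qed.

Lemma blue_case u v : u != v -> c u v = Blue -> (iota u * iota v != iota v * iota u)%g.
Proof.
move=> uv cb; apply/negP => /eqP e.
have := congr1 (fun f : {perm T} => val (f (((u, v) : K), ord0)).2) e.
rewrite /= !iotaM /comp.
have -> : off u (u, v) = Some 0 by rewrite /off /= (negbTE uv) cb eqxx.
have -> : off v (u, v) = Some 1 by rewrite /off /= (negbTE uv) cb eqxx eq_sym (negbTE uv).
have h1 := pr_gt1 (u, v); have h2 := N_gt (u, v).
rewrite /= rotn_10 rotn_00 // rotn_11 // !val_inord //; lia.
Qed.


Lemma green_comm u v : u != v -> c u v = Green -> commute (iota u) (iota v).
Proof.
move=> uv cg.
apply/permP => -[k i]; rewrite !iotaM; congr (_, inord _).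
case eu: (off u k) => [s|]; last by rewrite /comp eu.
case ev: (off v k) => [s'|]; last by rewrite /comp ev.
have p0 := ltnW (pr_gt1 k).
case: (@both_some u v k uv); rewrite ?eu ?ev // => ek; rewrite /comp eu ev /=.
  move: eu ev; rewrite ek /off /= (negbTE uv) cg !eqxx eq_sym (negbTE uv) => -[<-] [<-].
  by rewrite rot_disj // -ek.
move: eu ev; rewrite ek /off /= [v == u]eq_sym (negbTE uv) c_sym cg !eqxx => -[<-] [<-].
by rewrite rot_disj // -ek.
Qed.

Lemma green_noncyclic u v : u != v -> c u v = Green ->
  ~~ cyclic <<[set iota u; iota v]>>%g.
Proof.
move=> uv cg.
pose k0 : K := (u, v); have [p pE] : exists p, pr k0 = p by eexists.
have p1 : 1 < p by rewrite -pE; exact: pr_gt1 k0.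
have p0 : 0 < p := ltnW p1.
have pN : p + p <= N by rewrite addnn -pE; exact: N_gt k0.
have ou : off u k0 = Some 0 by rewrite /off /= (negbTE uv) cg eqxx.
have ov : off v k0 = Some p by rewrite /off /= (negbTE uv) cg eqxx eq_sym (negbTE uv) pE.
pose mu := \prod_(k in supp u :\ k0) pr k.
pose mv := \prod_(k in supp v :\ k0) pr k.
have cop w : ~~ (p %| \prod_(k in supp w :\ k0) pr k).
  rewrite -pE -prime_coprime ?pr_prime //.
  have := @cop_prod [set k0] (supp w :\ k0); rewrite big_set1; apply.
  by rewrite disjoints1 !inE eqxx.
have xp w : ((iota w ^+ (\prod_(k in supp w :\ k0) pr k)) ^+ p)%g = 1%g.
  rewrite -expgM iota_exp1 // => k kS.
  case: (k =P k0) => [->|ne]; first by rewrite pE dvdn_mull.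
  apply: dvdn_mulr; rewrite (bigD1 k) ?dvdn_mulr // in_setD1 kS andbT.
  exact/eqP.
have ex0 : val ((iota u ^+ mu)%g (k0, ord0)).2 = mu %% p.
  rewrite iotaX /comp ou pE /= iter_rotn // ifT; last by apply/andP; split => //; lia.
  rewrite val_inord //; have := ltn_mod mu p; lia.
have ey0 j : val ((iota v ^+ j)%g (k0, ord0)).2 = 0.
  rewrite iotaX /comp ov pE /= iter_rotn // ifF ?val_inord //.
  apply/negbTE; rewrite negb_and -ltnNge; lia.
have eyp : val ((iota v ^+ mv)%g (k0, inord p)).2 = p + mv %% p.
  rewrite iotaX /comp ov pE /= (@val_inord p); last lia.
  rewrite iter_rotn // ifT; last by apply/andP; split => //; lia.
  rewrite subnn add0n val_inord //; have := ltn_mod mv p; lia.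
have ord_p w : (iota w ^+ (\prod_(k in supp w :\ k0) pr k))%g != 1%g ->
    #[iota w ^+ (\prod_(k in supp w :\ k0) pr k)]%g = p.
  move=> nt; rewrite -order_eq1 in nt; rewrite -pE.
  apply/(prime_nt_dvdP (pr_prime k0) nt); rewrite pE.
  by rewrite order_dvdn xp.
have ntx : (iota u ^+ mu)%g != 1%g.
  apply/eqP => e; move: ex0; rewrite e perm1 /= => /esym /eqP.
  by have := cop u; rewrite /dvdn => /negbTE ->.
have nty : (iota v ^+ mv)%g != 1%g.
  apply/eqP => e; move: eyp; rewrite e perm1 /= val_inord; last lia.
  move=> /eqP; rewrite -{1}[p]addn0 eqn_add2l eq_sym.
  by have := cop v; rewrite /dvdn => /negbTE ->.
apply/negP => cG.
have sx : <[iota u ^+ mu]>%g \subset <<[set iota u; iota v]>>%g.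
  by rewrite cycle_subG groupX // mem_gen // !inE eqxx.
have sy : <[iota v ^+ mv]>%g \subset <<[set iota u; iota v]>>%g.
  by rewrite cycle_subG groupX // mem_gen // !inE eqxx orbT.
have := eq_subG_cyclic cG sx sy.
rewrite -[#|<[iota u ^+ mu]>%g|]/(#[iota u ^+ mu]%g) -[#|<[iota v ^+ mv]>%g|]/(#[iota v ^+ mv]%g).
rewrite (ord_p u ntx) (ord_p v nty) eqxx => /eqP exy.
have : (iota u ^+ mu)%g \in <[iota v ^+ mv]>%g by rewrite -exy cycle_id.
case/cycleP => j ej.
move: ex0; rewrite ej -expgM ey0 => /esym /eqP.
by have := cop u; rewrite /dvdn => /negbTE ->.
Qed.

End Constr.

Theorem mainTheorem13 (V : finType) (c : V -> V -> colour)
  (c_sym : forall u v, c u v = c v u) :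
  exists (gT : finGroupType) (iota : V -> gT),
    injective iota /\
    forall u v : V, u != v ->
      (c u v = Red -> epg_adj (iota u) (iota v)) /\
      (c u v = Green -> comm_adj (iota u) (iota v) /\ ~~ epg_adj (iota u) (iota v)) /\
      (c u v = Blue -> ~~ comm_adj (iota u) (iota v)).
Proof.
exists {perm T V}, (iota c); split.
  move=> u v e; apply/eqP; apply/negPn/negP => uv.
  by have := iota_inj c uv; rewrite e eqxx.
move=> u v uv; split; [move=> cr | split; [move=> cg | move=> cb]].
- by rewrite /epg_adj iota_inj // (red_case c_sym uv cr).
- rewrite /comm_adj /epg_adj iota_inj //= (green_comm c_sym uv cg) eqxx; split => //.
  first [exact: (green_noncyclic uv cg) | exact: (green_noncyclic c_sym uv cg)].
- by rewrite /comm_adj negb_and (blue_case uv cb) orbT.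
Qed.
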